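(* Let $\sigma=(\sigma_j)_{j=1}^\infty$ be a strictly decreasing sequence of real numbers with $\sigma_j\to0$, and let $\mathcal{K}(\sigma)=\{\sigma_je_j\}_{j=1}^\infty\cup\{0\}\subset c_0$. Let $n\ge1$ and $\gamma>0$. If $\sigma_1\le\gamma/2$ and there is $N\in\mathbb{N}\cup\{\infty\}$ such that $\sum_{j=1}^N\sigma_j^n\le(\gamma/2)^n$, then $d_n^\gamma(\mathcal{K}(\sigma))_{c_0}\le\sigma_N$, where $\sigma_\infty:=0$.
   Context: $c_0$ denotes the Banach space of real sequences converging to $0$ with the norm $\|x\|=\sup_j|x_j|$, and $(e_j)$ is its standard unit vector basis. For $k\ge1$ and a norm $\|\cdot\|_{Y_k}$ on $\mathbb{R}^k$ let $B_{Y_k}=\{y\in\mathbb{R}^k:\|y\|_{Y_k}\le1\}$. For $\mathcal{K}\subset c_0$ and $\gamma\ge0$, $d^\gamma(\mathcal{K},Y_k)_{c_0}=\inf_{\Phi}\sup_{f\in\mathcal{K}}\inf_{y\in B_{Y_k}}\|f-\Phi(y)\|$, the infimum over all maps $\Phi:B_{Y_k}\to c_0$ with $\|\Phi(y)-\Phi(y')\|\le\gamma\|y-y'\|_{Y_k}$ for all $y,y'\in B_{Y_k}$, and the Lipschitz width is $d_n^\gamma(\mathcal{K})_{c_0}=\inf_{1\le k\le n}\inf_{\|\cdot\|_{Y_k}}d^\gamma(\mathcal{K},Y_k)_{c_0}$, the inner infimum over all norms on $\mathbb{R}^k$. *)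

(* Defs.v *)
From HB Require Import structures.
From mathcomp Require Import all_boot all_order all_algebra.
From mathcomp Require Import all_classical all_reals all_analysis.
Set Implicit Arguments. Unset Strict Implicit. Unset Printing Implicit Defensive.
Import Order.TTheory GRing.Theory Num.Theory.
Import numFieldNormedType.Exports.
Local Open Scope classical_set_scope.
Local Open Scope ring_scope.

Section Defs.
Variable R : realType.

Definition in_c0 (x : nat -> R) : Prop := x @ \oo --> (0 : R).

Definition supnorm (x : nat -> R) : \bar R :=
  ereal_sup (range (fun j => (`|x j|)%:E)).

Definition seqsub (x y : nat -> R) : nat -> R := fun i => x i - y i.

Definition unitvec (j : nat) : nat -> R := fun i => (i == j)%:R.

Definition is_norm (k : nat) (N : 'rV[R]_k -> R) : Prop :=
  [/\ forall y, 0 <= N y,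
      forall y, N y = 0 -> y = 0,
      forall (a : R) y, N (a *: y) = `|a| * N y
    & forall y y', N (y + y') <= N y + N y'].

Definition unit_ball (k : nat) (N : 'rV[R]_k -> R) : set 'rV[R]_k :=
  [set y | N y <= 1].

(* gamma-Lipschitz maps B_{Y_k} -> c_0 (values outside the ball are irrelevant) *)
Definition lip_map (gamma : R) (k : nat) (N : 'rV[R]_k -> R)
    (Phi : 'rV[R]_k -> (nat -> R)) : Prop :=
  (forall y, unit_ball N y -> in_c0 (Phi y)) /\
  (forall y y', unit_ball N y -> unit_ball N y' ->
     (supnorm (seqsub (Phi y) (Phi y')) <= (gamma * N (y - y'))%:E)%E).

Definition dgamma (K : set (nat -> R)) (gamma : R) (k : nat)
    (N : 'rV[R]_k -> R) : \bar R :=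
  ereal_inf [set e | exists Phi, lip_map gamma N Phi /\
    e = ereal_sup [set d | exists2 f, K f &
          d = ereal_inf [set supnorm (seqsub f (Phi y)) | y in unit_ball N]]].

Definition lip_width (n : nat) (gamma : R) (K : set (nat -> R)) : \bar R :=
  ereal_inf [set e | exists (k : nat) (N : 'rV[R]_k -> R),
     [/\ (1 <= k)%N, (k <= n)%N, is_norm N & e = dgamma K gamma N]].

(* K(sigma) = {sigma_j e_j : j >= 1} u {0}  (sequence sigma indexed from 1) *)
Definition Ksigma (sigma : nat -> R) : set (nat -> R) :=
  [set f | (exists2 j, (1 <= j)%N & f = (fun i => sigma j * unitvec j i))
           \/ f = (fun _ => 0)].

End Defs.

(* Main.v *)
Require Import Defs.
From HB Require Import structures.
From mathcomp Require Import all_boot all_order all_algebra.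
From mathcomp Require Import all_classical all_reals all_analysis.
From mathcomp Require Import zify ring lra.
Set Implicit Arguments. Unset Strict Implicit. Unset Printing Implicit Defensive.
Import Order.TTheory GRing.Theory Num.Theory.
Import numFieldNormedType.Exports.

Section Pack.
Variables (n K : nat).
Definition Gr := {ffun 'I_n -> 'I_K}.
Definition bad (h : Gr) (c : nat) : {set Gr} :=
  [set g : Gr | [forall k, (g k <= h k + c) && (h k <= g k + c)]].

Lemma card_bad h c : #|bad h c| <= (2*c).+1 ^ n.
Proof.
pose f (g : Gr) : {ffun 'I_n -> 'I_(2*c).+1} := [ffun k => inord (g k + c - h k)].
rewrite -(@card_in_imset _ _ f).
  by apply: leq_trans (max_card _) _; rewrite card_ffun !card_ord.
move=> g g' /[!inE] /forallP Hg /forallP Hg' /ffunP E.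
apply/ffunP => k; apply: val_inj.
move: (E k) (Hg k) (Hg' k); rewrite !ffunE => /(congr1 val) /= + /andP[H1 H2] /andP[H3 H4].
rewrite !inordK; [lia | lia | lia].
Qed.

Lemma card_union (s : seq Gr) (c : nat -> nat) g0 m :
  #|\bigcup_(i < m) bad (nth g0 s i) (c i)| <= \sum_(i < m) (2 * c i).+1 ^ n.
Proof.
elim: m => [|m IH]; first by rewrite !big_ord0 cards0.
rewrite !big_ord_recr /=.
apply: leq_trans (leq_card_setU _ _) _.
by apply: leq_add => //; apply: card_bad.
Qed.

Lemma greedy (c : nat -> nat) (g0 : Gr) m :
  \sum_(i < m) (2 * c i).+1 ^ n < K ^ n ->
  exists s : seq Gr, size s = m /\
    forall i j, (i < j < m)%N -> nth g0 s j \notin bad (nth g0 s i) (c i).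
Proof.
elim: m => [|m IH] Hs; first by exists [::]; split => // i j; lia.
have [s [Hsz Hsep]] : exists s : seq Gr, size s = m /\
    forall i j, (i < j < m)%N -> nth g0 s j \notin bad (nth g0 s i) (c i).
  by apply: IH; apply: leq_ltn_trans Hs; rewrite big_ord_recr /= leq_addr.
set U := \bigcup_(i < m) bad (nth g0 s i) (c i).
have HU : #|U| < #|[set: Gr]|.
  rewrite cardsT card_ffun !card_ord; apply: leq_ltn_trans (card_union s c g0 m) _.
  by apply: leq_ltn_trans Hs; rewrite big_ord_recr /= leq_addr.
have [g Hg] : exists g, g \notin U.
  apply/existsP; rewrite -negb_forall; apply/negP => /forallP H.
  have : [set: Gr] \subset U by apply/fintype.subsetP => x _; exact: H.
  by move/subset_leq_card; rewrite leqNgt HU.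
exists (rcons s g); split; first by rewrite size_rcons Hsz.
move=> i j Hij; rewrite !nth_rcons Hsz.
have -> : (i < m)%N by lia.
case: (ltnP j m) => Hj; first by apply: Hsep; lia.
have -> : j == m by lia.
have Him : (i < m)%N by lia.
apply: contra Hg => Hb; apply/finset.bigcupP; exists (Ordinal Him) => //.
Qed.
End Pack.

Local Open Scope classical_set_scope.
Local Open Scope ring_scope.

Lemma entry_le_norm (R : realType) n (v : 'rV[R]_n) k : `|v ord0 k| <= `|v|.
Proof.
rewrite [leRHS]/Num.Def.normr /= mx_normrE; apply/bigmax_geP; right => /=.
by exists (ord0, k).
Qed.

Lemma norm_le (R : realType) n (v : 'rV[R]_n) (x : R) :
  0 <= x -> (forall k, `|v ord0 k| <= x) -> `|v| <= x.
Proof.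
move=> x0 H; rewrite /Num.Def.normr /= mx_normrE (bigmax_le _ x0)//= => -[i j] _.
by rewrite (ord1 i).
Qed.

Lemma packing (R : realType) (n m : nat) (t : nat -> R) :
  (1 <= n)%N -> (forall i, (i < m)%N -> 0 < t i) ->
  \sum_(i < m) (2 * t i) ^+ n <= 1 ->
  exists y : nat -> 'rV[R]_n, (forall i, `|y i| <= 1) /\
    forall i j, (i < j < m)%N -> t i < `|y j - y i|.
Proof.
move=> n1 tpos Hsum.
set S := \sum_(i < m) (t i)^-1.
have S0 : 0 <= S by apply: sumr_ge0 => i _; rewrite invr_ge0 ltW // tpos.
set M := (Num.truncn S).+1.
have SM : S < M%:R by rewrite truncnS_gt.
have M0 : (0 : R) < M%:R by rewrite ltr0n.
have tM : forall i, (i < m)%N -> 1 < t i * M%:R.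
  move=> i im; have ti := tpos i im.
  have : (t i)^-1 <= S.
    by rewrite /S (bigD1 (Ordinal im)) //= lerDl sumr_ge0 // => j _; rewrite invr_ge0 ltW // tpos.
  move=> H; have : (t i)^-1 < M%:R by apply: le_lt_trans H SM.
  by rewrite -ltr_pdivrMl // mulr1.
set c := fun i => Num.truncn (t i * M%:R).
have cP : forall i, (i < m)%N -> (1 <= c i)%N /\ (c i)%:R <= t i * M%:R < (c i).+1%:R.
  move=> i im; have := tM i im => h.
  split; first by rewrite truncn_gt0 ltW.
  by apply: truncn_itv; lra.
pose K := (2 * M).+1.
pose g0 : Gr n K := [ffun _ => ord0].
have Hc : (\sum_(i < m) (2 * c i).+1 ^ n < K ^ n)%N.
  rewrite -(ltr_nat R) natr_sum natrX.
  apply: (@le_lt_trans _ _ ((2 * M%:R) ^+ n)).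
    apply: (@le_trans _ _ (\sum_(i < m) ((2 * M%:R) ^+ n * (2 * t i) ^+ n))).
      apply: ler_sum => i _; rewrite natrX -exprMn.
      have [c1 /andP[c2 c3]] := cP i (ltn_ord i).
      have ti := tpos i (ltn_ord i).
      have hM : (0:R) <= 2 * M%:R by lra.
      have ht : (0:R) <= 2 * t i by lra.
      rewrite lerXn2r ?nnegrE ?mulr_ge0 ?(ltW ti) //.
      have -> : (2 * c i).+1%:R = (2 * c i)%:R + 1 :> R by rewrite -natr1.
      rewrite natrM.
      have : (1 : R) <= (c i)%:R by rewrite ler1n.
      lra.
    by rewrite -mulr_sumr ler_piMr // exprn_ge0 //; lra.
  rewrite ltrXn2r ?nnegrE ?ler0n ?mulr_ge0 ?(ltW M0) //.
    by rewrite -lt0n.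
  have -> : K%:R = (2 * M)%:R + 1 :> R by rewrite /K -natr1.
  rewrite natrM; lra.
have [s [Hsz Hsep]] := greedy g0 Hc.
pose pt (g : Gr n K) : 'rV[R]_n := \row_(k < n) ((g k)%:R / M%:R - 1).
exists (fun i => pt (nth g0 s i)); split.
  move=> i; apply: norm_le => // k; rewrite mxE ler_norml.
  have : ((nth g0 s i k) <= 2 * M)%N by have := ltn_ord (nth g0 s i k).
  rewrite -(ler_nat R) natrM => h.
  have h0 : (0 : R) <= (nth g0 s i k)%:R / M%:R by apply: divr_ge0.
  have h2 : ((nth g0 s i k)%:R / M%:R : R) <= 2 by rewrite ler_pdivrMr.
  lra.
move=> i j Hij; have := Hsep i j Hij.
rewrite inE negb_forall => /existsP [k].
set a := nth g0 s j k; set b := nth g0 s i k.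
move=> Hk.
have Hab : ((c i).+1 <= a - b)%N || ((c i).+1 <= b - a)%N.
  by move: Hk; rewrite negb_and -!ltnNge; lia.
have im : (i < m)%N by lia.
have [_ /andP[_ c3]] := cP i im.
apply: (@lt_le_trans _ _ ((c i).+1%:R / M%:R)).
  by rewrite ltr_pdivlMr.
apply: le_trans (entry_le_norm _ k).
rewrite !mxE.
have -> : (a%:R / M%:R - 1) - (b%:R / M%:R - 1) = (a%:R - b%:R) / M%:R :> R.
  by rewrite mulrBl; lra.
rewrite normrM (@gtr0_norm _ (M%:R^-1)) ?invr_gt0 // ler_pM2r ?invr_gt0 //.
case/orP: Hab => h.
  have hab : (b <= a)%N by lia.
  rewrite -natrB // ger0_norm ?ler0n // ler_nat; lia.
have hab : (a <= b)%N by lia.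
rewrite -opprB -natrB // normrN ger0_norm ?ler0n // ler_nat; lia.
Qed.

Lemma max0_lip (R : realType) (a b : R) :
  `|Num.max 0 a - Num.max 0 b| <= `|a - b|.
Proof.
have [ha|ha] := leP 0 a; have [hb|hb] := leP 0 b.
- by [].
- rewrite subr0 ger0_norm //.
  by apply: le_trans (ler_norm _); lra.
- rewrite sub0r normrN ger0_norm // distrC.
  by apply: le_trans (ler_norm _); lra.
- by rewrite subrr normr0.
Qed.


Lemma sigma_mono (R : realType) (sigma : nat -> R) :
  (forall j, (1 <= j)%N -> sigma j.+1 < sigma j) ->
  forall i j, (1 <= i <= j)%N -> sigma j <= sigma i.
Proof.
move=> Hd i j /andP[hi]; elim: j => [|j IH] hij.
  by have -> : i = 0%N by lia.
case: (ltngtP i j.+1) => h; [|lia|by rewrite h].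
apply: le_trans (IH _); [apply: ltW; apply: Hd|]; lia.
Qed.

Lemma sigma_pos (R : realType) (sigma : nat -> R) :
  (forall j, (1 <= j)%N -> sigma j.+1 < sigma j) ->
  (fun j => sigma j) @ \oo --> (0 : R) ->
  forall j, (1 <= j)%N -> 0 < sigma j.
Proof.
move=> Hd Hc j hj.
have h0 : 0 <= sigma j.+1.
  have <- : lim ((fun j => sigma j) @ \oo) = 0 by apply: cvg_lim.
  apply: limr_le; first by apply/cvg_ex; exists 0.
  exists j.+1 => // k /= hk; apply: sigma_mono => //; lia.
by apply: le_lt_trans h0 (Hd j hj).
Qed.

Lemma supnorm_le (R : realType) (x : nat -> R) (c : R) :
  (forall i, `|x i| <= c) -> (supnorm x <= c%:E)%E.
Proof. by move=> H; apply: ge_ereal_sup => _ [i _ <-]; rewrite lee_fin. Qed.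

Lemma finite_case (R : realType) (sigma : nat -> R) (n : nat) (gamma : R) (m : nat) :
  (forall j, (1 <= j)%N -> sigma j.+1 < sigma j) ->
  (fun j => sigma j) @ \oo --> (0 : R) ->
  (1 <= n)%N -> 0 < gamma -> (1 <= m)%N ->
  \sum_(1 <= j < m.+1) sigma j ^+ n <= (gamma / 2) ^+ n ->
  (lip_width n gamma (Ksigma sigma) <= (sigma m)%:E)%E.
Proof.
move=> Hd Hc n1 g0 m1 Hs.
have spos := sigma_pos Hd Hc.
have smono := sigma_mono Hd.
pose t i := sigma i.+1 / gamma.
have tpos : forall i, (i < m)%N -> 0 < t i by move=> i _; apply: divr_gt0 => //; apply: spos.
have g2 : 0 < gamma / 2 by lra.
have Hs' : \sum_(i < m) (2 * t i) ^+ n <= 1.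
  have -> : \sum_(i < m) (2 * t i) ^+ n = (\sum_(i < m) sigma i.+1 ^+ n) / (gamma / 2) ^+ n.
    rewrite mulr_suml; apply: eq_bigr => i _.
    have gn : gamma != 0 by rewrite gt_eqF.
    rewrite /t (_ : 2 * (sigma i.+1 / gamma) = sigma i.+1 / (gamma / 2)) ?expr_div_n //.
    by field.
  have -> : \sum_(i < m) sigma i.+1 ^+ n = \sum_(1 <= j < m.+1) sigma j ^+ n.
    by rewrite big_add1 /= big_mkord.
  by rewrite ler_pdivrMr ?exprn_gt0 // mul1r.
have [y [yb ysep]] := packing n1 tpos Hs'.
pose Y j := y j.-1.
have sep : forall i j, (1 <= i <= m)%N -> (1 <= j <= m)%N -> i != j ->
    sigma i <= gamma * `|Y i - Y j|.
  move=> i j hi hj hij.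
  case: (ltngtP i j) => h; last by rewrite h eqxx in hij.
    have := ysep i.-1 j.-1 ltac:(lia).
    rewrite /t prednK; last by lia.
    by rewrite ltr_pdivrMr // mulrC distrC => /ltW.
  have := ysep j.-1 i.-1 ltac:(lia).
  rewrite /t prednK; last by lia.
  rewrite ltr_pdivrMr // mulrC => /ltW; apply: le_trans; apply: smono; lia.
pose Phi (x : 'rV[R]_n) : nat -> R := fun i =>
  if (1 <= i <= m)%N then Num.max 0 (sigma i - gamma * `|x - Y i|) else 0.
have PhiY : forall j, (1 <= j <= m)%N -> forall i, Phi (Y j) i = if i == j then sigma j else 0.
  move=> j hj i; rewrite /Phi.
  case: (eqVneq i j) => [->|hij].
    rewrite hj subrr normr0 mulr0 subr0.
    by apply: max_r; apply: ltW; apply: spos; lia.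
  case: ifP => // hi.
  apply: max_l; rewrite subr_le0 distrC; apply: sep => //.
pose nrm := fun x : 'rV[R]_n => `|x|.
have lip : lip_map gamma nrm Phi.
  split.
    move=> x _; rewrite /in_c0; apply: cvg_near_cst; exists m.+1 => // i /= hi.
    rewrite /Phi; case: ifP => // /andP[_ h]; lia.
  move=> x x' _ _; apply: supnorm_le => i; rewrite /seqsub /Phi.
  rewrite /nrm; case: ifP => _; last by rewrite subrr normr0; apply: mulr_ge0; [apply: ltW|apply: normr_ge0].
  apply: le_trans (max0_lip _ _) _.
  have -> : (sigma i - gamma * `|x - Y i|) - (sigma i - gamma * `|x' - Y i|)
      = gamma * (`|x' - Y i| - `|x - Y i|) by ring.
  rewrite normrM gtr0_norm // ler_pM2l // distrC.
  apply: le_trans (ler_dist_dist _ _) _.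
  by rewrite opprB addrA subrK.
have key : forall f, Ksigma sigma f -> exists j, (1 <= j <= m)%N /\
    forall i, `|f i - Phi (Y j) i| <= sigma m.
  have sm0 : 0 <= sigma m by apply: ltW; apply: spos.
  have hm : (1 <= m <= m)%N by rewrite m1 leqnn.
  move=> f [[j hj ->]| ->].
    case: (leqP j m) => hjm.
      have hj' : (1 <= j <= m)%N by rewrite hj hjm.
      exists j; split => // i; rewrite PhiY // /unitvec.
      by case: eqVneq => _; rewrite ?mulr1 ?mulr0 subrr normr0.
    exists m; split => // i; rewrite PhiY // /unitvec.
    case: (eqVneq i j) => [->|hij].
      have -> : (j == m) = false by apply/negbTE; rewrite neq_ltn hjm orbT.
      rewrite mulr1 subr0 ger0_norm; last by apply: ltW; apply: spos.
      by apply: smono; rewrite m1 ltnW.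
    rewrite mulr0; case: ifP => _; last by rewrite subrr normr0.
    by rewrite sub0r normrN ger0_norm.
  exists m; split => // i; rewrite PhiY //.
  case: ifP => _; last by rewrite subrr normr0.
  by rewrite sub0r normrN ger0_norm.
rewrite /lip_width.
apply: (@le_trans _ _ (dgamma (Ksigma sigma) gamma nrm)).
  apply: ereal_inf_lbound; exists n, nrm; split => //.
  split.
  - by move=> x; apply: normr_ge0.
  - by move=> x; apply: normr0_eq0.
  - by move=> a x; apply: normrZ.
  - by move=> x x'; apply: ler_normD.
apply: (@le_trans _ _ (ereal_sup [set d | exists2 f, Ksigma sigma f &
    d = ereal_inf [set supnorm (seqsub f (Phi x)) | x in unit_ball nrm]])).
  by apply: ereal_inf_lbound; exists Phi; split.
apply: ge_ereal_sup => _ [f Kf ->].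
have [j [hj Hj]] := key f Kf.
apply: le_trans (ereal_inf_lbound _) (supnorm_le Hj).
by exists (Y j) => //; apply: yb.
Qed.

Theorem lemma4p9 (R : realType) (sigma : nat -> R) (n : nat) (gamma : R)
    (N : option nat) :
  (forall j, (1 <= j)%N -> sigma j.+1 < sigma j) ->
  (fun j => sigma j) @ \oo --> (0 : R) ->
  (1 <= n)%N -> 0 < gamma ->
  sigma 1%N <= gamma / 2 ->
  match N with
  | Some m => (1 <= m)%N /\ \sum_(1 <= j < m.+1) sigma j ^+ n <= (gamma / 2) ^+ n
  | None => (\sum_(1 <= j <oo) ((sigma j ^+ n)%:E) <= ((gamma / 2) ^+ n)%:E)%E
  end ->
  (lip_width n gamma (Ksigma sigma) <=
     (match N with Some m => sigma m | None => 0 end)%:E)%E.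
Proof.
move=> Hd Hc n1 g0 _; case: N => [m [m1 Hs]|Hs].
  exact: finite_case.
have spos := sigma_pos Hd Hc.
have Hm : forall m, (1 <= m)%N -> (lip_width n gamma (Ksigma sigma) <= (sigma m)%:E)%E.
  move=> m m1; apply: finite_case => //.
  rewrite -lee_fin -sumEFin; apply: le_trans Hs.
  apply: nneseries_lim_ge => k hk _; rewrite lee_fin exprn_ge0 //.
  by apply: ltW; apply: spos.
move: (Hm 1%N erefl); case: (lip_width n gamma (Ksigma sigma)) Hm => [r| |] Hm H1; last by rewrite leNye.
  2: by rewrite leye_eq in H1.
rewrite lee_fin.
have <- : lim ((fun j => sigma j) @ \oo) = 0 by apply: cvg_lim.
apply: limr_ge; first by apply/cvg_ex; exists 0.
by exists 1%N => // k /= hk; rewrite -lee_fin; apply: Hm.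
Qed.
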